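(* Let $H$ be a fixed connected graph with $k=|V(H)|>1$. Let $G$ be an online graph with vertices $v_1,\dots,v_n$ (in order of appearance) and let $b_1,\dots,b_n\in\{0,1\}$ be advice bits with $b_t$ assigned to $v_t$. Suppose every induced copy of $H$ in $G$ contains at least one vertex $v_t$ with $b_t=1$. Then there is an online graph $G'$ with vertices $v_1,\dots,v_n,v_{n+1},\dots,v_{n'}$ such that $G'_n=G$ (the first $n$ revealed vertices of $G'$ induce exactly $G$), and the advice sequence $b'$ defined by $b'_t=b_t$ for $t\le n$ and $b'_t=0$ for $t>n$ is correct for $G'$ and is the only correct advice for $G'$; that is, the set $\{v_t: b_t=1\}$ is the unique minimum-size set $S\subseteq V(G')$ such that $G'-S$ is $H$-free.
   Context: All graphs are finite, simple and undirected. An induced copy of $H$ in $G$ is an induced subgraph isomorphic to $H$; $G$ is $H$-free if it has none. For $S\subseteq V(G)$, $G-S=G[V(G)\setminus S]$. An online graph has its vertices revealed one at a time, with $G_t$ denoting the subgraph induced by the first $t$ revealed vertices. Advice (predictions) assigns one bit to each vertex; it is correct for a graph if the set of vertices with bit $1$ is a minimum-size set $S$ with $G-S$ $H$-free. *)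

(* Defs.v *)
From mathcomp Require Import all_boot.
Set Implicit Arguments. Unset Strict Implicit. Unset Printing Implicit Defensive.

Definition simple_graph (V : finType) (e : rel V) : Prop :=
  symmetric e /\ irreflexive e.

Definition connected_graph (V : finType) (e : rel V) : Prop :=
  forall x y : V, connect e x y.

Definition induced_copy (VH VG : finType) (eH : rel VH) (eG : rel VG)
  (f : VH -> VG) : Prop :=
  injective f /\ forall x y : VH, eG (f x) (f y) = eH x y.

(* G - S is H-free: every induced copy of H in G meets S
   (an induced copy of H in G - S is exactly an induced copy of H in G
    avoiding S). *)
Definition minus_H_free (VH VG : finType) (eH : rel VH) (eG : rel VG)
  (S : {set VG}) : Prop :=
  forall f : VH -> VG, induced_copy eH eG f -> exists x : VH, f x \in S.

(* S is a minimum-size set whose removal makes G H-free, i.e. the advice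
   with 1-set S is correct for G. *)
Definition min_H_deletion (VH VG : finType) (eH : rel VH) (eG : rel VG)
  (S : {set VG}) : Prop :=
  minus_H_free eH eG S /\
  forall T : {set VG}, minus_H_free eH eG T -> #|S| <= #|T|.

(* Main.v *)
Require Import Defs.
From mathcomp Require Import all_boot.
Set Implicit Arguments. Unset Strict Implicit. Unset Printing Implicit Defensive.

Lemma connect_prop (T : finType) (e : rel T) (P : T -> Prop) x y :
  connect e x y -> P x -> (forall z z', e z z' -> P z -> P z') -> P y.
Proof.
move=> /connectP [p pth ->] Px step.
elim: p x pth Px => [|z p IH] x //= /andP [exz pth] Px.
exact: IH pth (step _ _ exz Px).
Qed.

Lemma nbr (VH : finType) (eH : rel VH) :
  connected_graph eH -> 1 < #|VH| -> forall x, exists y, eH x y.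
Proof.
move=> Hconn Hk x.
have [y neq] : exists y, y != x.
  case: (pickP (fun y => y != x)) => [y Hy|H]; first by exists y.
  exfalso; suff : #|VH| <= 1 by rewrite leqNgt Hk.
  rewrite -(card1 x); apply/subset_leq_card/subsetP => y _.
  by rewrite inE; move/negbFE: (H y).
case: (pickP (fun y => eH x y)) => [z Hz|H]; first by exists z.
exfalso; move/eqP: neq; apply.
apply: (@connect_prop _ _ (fun z => z = x) _ _ (Hconn x y) erefl).
by move=> z z' ezz' Ez; rewrite Ez H in ezz'.
Qed.

Lemma core (VH : finType) (eH : rel VH) (V : finType) (e : rel V)
  (B : {set V}) (m : nat) :
  minus_H_free eH e B -> #|B| < m ->
  (forall v, v \in B -> exists g : 'I_m -> VH -> V,
      (forall j, induced_copy eH e (g j)) /\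
      (forall j j' x x', g j x = g j' x' -> g j x != v -> j = j')) ->
  min_H_deletion eH e B /\ (forall S, min_H_deletion eH e S -> S = B).
Proof.
move=> feas ltBm cop.
have key : forall T, minus_H_free eH e T -> B \subset T \/ m <= #|T|.
  move=> T hT; case: (boolP (B \subset T)) => [sub|nsub]; first by left.
  right.
  have [v vB vT] : exists2 v, v \in B & v \notin T.
    by move/subsetPn: nsub => [v ? ?]; exists v.
  have [g [gc gd]] := cop v vB.
  have hx : forall j, exists x, g j x \in T by move=> j; exact: hT _ (gc j).
  pose h j := if [pick x | g j x \in T] is Some x then g j x else v.
  have hT' : forall j, exists x, h j = g j x /\ g j x \in T.
    move=> j; rewrite /h; case: pickP => [x Hx|H]; first by exists x.
    by have [x Hx] := hx j; move: (H x); rewrite Hx.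
  have hinj : injective h.
    move=> j j' E.
    have [x [Ex Tx]] := hT' j; have [x' [Ex' Tx']] := hT' j'.
    apply: (gd j j' x x'); first by rewrite -Ex -Ex'.
    by apply/eqP=> Ev; move: Tx; rewrite Ev (negbTE vT).
  rewrite -[m]card_ord -cardsT -(card_imset _ hinj).
  apply/subset_leq_card/subsetP => y /imsetP [j _ ->].
  by have [x [-> Tx]] := hT' j.
split.
  split; first done.
  move=> T hT; case: (key T hT) => [sub|le]; first exact: subset_leq_card.
  by apply: leq_trans le; exact: ltnW.
move=> S [hS minS]; have le := minS B feas.
case: (key S hS) => [sub|le2].
  by apply/eqP; rewrite eq_sym eqEcard sub le.
by have := leq_trans le2 le; rewrite leqNgt ltBm.
Qed.

Definition gE (VH : finType) (eH : rel VH) (h0 : VH) (n m : nat)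
  (eG : rel 'I_n) (b : 'I_n -> bool) :
  rel ('I_n + ('I_n * 'I_m * VH))%type := fun x y =>
  match x, y with
  | inl i, inl j => eG i j
  | inl i, inr (t, _, h) => b t && (i == t) && eH h0 h
  | inr (t, _, h), inl i => b t && (i == t) && eH h0 h
  | inr (t, j, h), inr (t', j', h') =>
      [&& b t, t == t', j == j', h != h0, h' != h0 & eH h h']
  end.

Definition isB (VH : finType) (n m : nat) (b : 'I_n -> bool)
  (w : ('I_n + ('I_n * 'I_m * VH))%type) :=
  if w is inl t then b t else false.

Lemma gE_simple (VH : finType) (eH : rel VH) (h0 : VH) n m eG b :
  simple_graph eH -> simple_graph eG -> simple_graph (@gE VH eH h0 n m eG b).
Proof.
move=> [sH iH] [sG iG]; split.
  move=> [i|[[t j] h]] [i'|[[t' j'] h']] //=.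
  rewrite (eq_sym t') (eq_sym j') (sH h').
  case: (t =P t') => [<-|_]; last by rewrite !andbF.
  by case: (b t); case: (j == j'); case: (h != h0); case: (h' != h0).
move=> [i|[[t j] h]] /=; first exact: iG.
by rewrite iH !andbF.
Qed.

Lemma Wfeas (VH : finType) (eH : rel VH) (h0 : VH) n m (eG : rel 'I_n) (b : 'I_n -> bool) :
  simple_graph eH -> connected_graph eH -> 1 < #|VH| ->
  (forall f : VH -> 'I_n, induced_copy eH eG f -> exists x : VH, b (f x)) ->
  forall f, induced_copy eH (@gE VH eH h0 n m eG b) f ->
    exists x, isB b (f x).
Proof.
move=> [sH iH] Hconn Hk Hcover f [finj fe].
case: (pickP (fun x => if f x is inr _ then true else false)) => [x Hx|Hall].
  case Efx: (f x) Hx => [//|[[t j] h]] _.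
  have [y exy] := nbr Hconn Hk x.
  have E1 := fe x y; rewrite exy Efx in E1.
  have [bt hh0] : b t /\ h != h0.
    case: (f y) E1 => [i|[[t2 j2] h2]] /=.
      case/andP=> /andP [-> _] e0; split => //.
      by apply/eqP=> Eh; rewrite Eh iH in e0.
    by case/and5P=> -> _ _ -> _.
  case: (pickP (fun z => f z == inl t)) => [z Hz|Hno].
    by exists z; rewrite (eqP Hz).
  have cl : forall z, exists h', h' != h0 /\ f z = inr (t, j, h').
    move=> z; apply: (@connect_prop _ _ (fun z => exists h', h' != h0 /\ f z = inr (t, j, h')) _ _ (Hconn x z)).
      by exists h.
    move=> z1 z2 e12 [h' [h'0 E']].
    have E2 := fe z1 z2; rewrite e12 E' in E2.
    case Ez2: (f z2) E2 => [i|[[t2 j2] h2]] /=.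
      case/andP=> /andP [_ /eqP Ei] _.
      by move: (Hno z2); rewrite Ez2 Ei eqxx.
    case/and5P=> _ /eqP <- /eqP <- _ /andP [h20 _].
    by exists h2.
  pose pi z := if f z is inr (_, _, h') then h' else h0.
  have piE : forall z, f z = inr (t, j, pi z).
    by move=> z; rewrite /pi; have [h' [_ ->]] := cl z.
  have piinj : injective pi.
    by move=> z z' E; apply: finj; rewrite !piE E.
  have [g _ gK] := injF_bij piinj.
  have [h' [h'0 E']] := cl (g h0).
  by move: (piE (g h0)); rewrite E' gK => -[Eh]; rewrite Eh eqxx in h'0.
have Hf : forall x, exists i, f x = inl i.
  by move=> x; move: (Hall x); case: (f x) => // i _; exists i.
have [i0 _] := Hf h0.
pose f' x := if f x is inl i then i else i0.
have f'E : forall x, f x = inl (f' x).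
  by move=> x; rewrite /f'; have [i ->] := Hf x.
have [x bx] : exists x, b (f' x).
  apply: Hcover; split.
    by move=> x y E; apply: finj; rewrite !f'E E.
  by move=> x y; rewrite -fe !f'E.
by exists x; rewrite f'E.
Qed.

Theorem mainTheorem6 (VH : finType) (eH : rel VH)
  (Hsimple : simple_graph eH) (Hconn : connected_graph eH)
  (Hk : 1 < #|VH|)
  (n : nat) (eG : rel 'I_n) (Gsimple : simple_graph eG)
  (b : 'I_n -> bool)
  (Hcover : forall f : VH -> 'I_n, induced_copy eH eG f ->
              exists x : VH, b (f x)) :
  exists (n' : nat) (hn : n <= n') (eG' : rel 'I_n'),
    [/\ simple_graph eG',
        (forall i j : 'I_n, eG' (widen_ord hn i) (widen_ord hn j) = eG i j),
        min_H_deletion eH eG' [set widen_ord hn t | t in [set t | b t]]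
      & forall S : {set 'I_n'}, min_H_deletion eH eG' S ->
          S = [set widen_ord hn t | t in [set t | b t]]].
Proof.
have [h0 _] : exists h0 : VH, h0 \in VH by apply/card_gt0P; apply: ltnW.
pose m := n.+1.
pose p := #|{: 'I_n * 'I_m * VH}|.
pose phi (x : 'I_(n + p)) : ('I_n + ('I_n * 'I_m * VH))%type :=
  match split x with inl i => inl i | inr k => inr (enum_val k) end.
pose psi (w : ('I_n + ('I_n * 'I_m * VH))%type) : 'I_(n + p) :=
  unsplit (match w with inl i => inl i | inr g => inr (enum_rank g) end).
have phiK : cancel phi psi.
  move=> x; rewrite /phi /psi; case: splitP => [i Ei|k Ek].
    by apply: val_inj; rewrite /= Ei.
  by apply: val_inj; rewrite /= enum_valK Ek.
have psiK : cancel psi phi.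
  move=> [i|g]; rewrite /phi /psi unsplitK //.
  by rewrite enum_rankK.
pose E := @gE VH eH h0 n m eG b.
have hn : n <= n + p by apply: leq_addr.
exists (n + p), hn, (fun x y => E (phi x) (phi y)).
have psiW : forall t, psi (inl t) = widen_ord hn t by move=> t; apply: val_inj.
have [sE iE] := @gE_simple VH eH h0 n m eG b Hsimple Gsimple.
set B := [set widen_ord hn t | t in [set t | b t]].
have feas : minus_H_free eH (fun x y => E (phi x) (phi y)) B.
  move=> f [finj fe].
  have [x bx] := @Wfeas VH eH h0 n m eG b Hsimple Hconn Hk Hcover (phi \o f)
    (conj (fun x y E' => finj _ _ (can_inj phiK E')) fe).
  exists x; move: bx; rewrite -[f x]phiK /=.
  case: (phi (f x)) => [t bt|//].
  by rewrite psiW; apply/imsetP; exists t; rewrite ?inE.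
have [mB uB] : min_H_deletion eH (fun x y => E (phi x) (phi y)) B /\
    (forall S, min_H_deletion eH (fun x y => E (phi x) (phi y)) S -> S = B).
  apply: (@core _ _ _ _ _ m feas).
    by apply: (leq_ltn_trans (leq_imset_card _ _)); rewrite ltnS; apply: leq_trans (max_card _) _; rewrite card_ord.
  move=> v /imsetP [t]; rewrite inE => bt ->.
  pose gW (j : 'I_m) (x : VH) : ('I_n + ('I_n * 'I_m * VH))%type :=
    if x == h0 then inl t else inr (t, j, x).
  exists (fun j x => psi (gW j x)); split.
    move=> j; split.
      move=> x y /(can_inj psiK); rewrite /gW.
      case: (eqVneq x h0) => [->|xh]; case: (eqVneq y h0) => [->|yh] //.
      by move=> [].
    move=> x y /=; rewrite !psiK /gW /E /=.
    case: (eqVneq x h0) => [->|xh]; case: (eqVneq y h0) => [->|yh] /=.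
    - by rewrite (proj2 Gsimple) (proj2 Hsimple).
    - by rewrite bt eqxx.
    - by rewrite bt eqxx (proj1 Hsimple).
    - by rewrite bt !eqxx xh yh.
  move=> j j' x x'; rewrite -psiW /gW.
  case: ifP => xh; first by move=> _; rewrite eqxx.
  case: ifP => x'h; first by move=> ->; rewrite eqxx.
  by move/(can_inj psiK) => -[-> _].
split => //.
- split; first by move=> x y; exact: sE.
  by move=> x; exact: iE.
- by move=> i j; rewrite -!psiW !psiK.
Qed.
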